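(* Let $a,b,c,y,\alpha$ be real numbers with $0<c<y<1$ and $y<b<a$. Then \[ \int_{c}^{y}\frac{1-\alpha u}{1-u^2}\,\frac{u\,\mathrm{d}u}{\sqrt{(a-u)(b-u)(u-c)}} =\frac{\sqrt{y-c}}{(1-c^2)\sqrt{(a-c)(b-c)}}\left(2c(1-c\alpha)\,X+\frac23(1-2c\alpha)(y-c)\,Y-\frac25\,\alpha\,(y-c)^2\,Z\right), \] where, writing $\mathbf{x}=\left(\frac{y-c}{1-c},\,-\frac{y-c}{1+c},\,-\frac{y-c}{c-a},\,-\frac{y-c}{c-b}\right)$, \[ X=\mathrm{F}_{D}^{(4)}\left(\tfrac12;1,1,\tfrac12,\tfrac12;\tfrac32;\mathbf{x}\right),\quad Y=\mathrm{F}_{D}^{(4)}\left(\tfrac32;1,1,\tfrac12,\tfrac12;\tfrac52;\mathbf{x}\right),\quad Z=\mathrm{F}_{D}^{(4)}\left(\tfrac52;1,1,\tfrac12,\tfrac12;\tfrac72;\mathbf{x}\right). \]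
   Context: For $n\ge1$, the Lauricella hypergeometric function of $n$ variables is \[ \mathrm{F}_{D}^{(n)}(a;b_1,\dots,b_n;c;x_1,\dots,x_n)=\sum_{m_1,\dots,m_n\ge0}\frac{(a)_{m_1+\cdots+m_n}(b_1)_{m_1}\cdots(b_n)_{m_n}}{(c)_{m_1+\cdots+m_n}\,m_1!\cdots m_n!}\,x_1^{m_1}\cdots x_n^{m_n},\qquad |x_i|<1, \] where $(\lambda)_m=\Gamma(\lambda+m)/\Gamma(\lambda)$ is the Pochhammer symbol; for $\operatorname{Re}c>\operatorname{Re}a>0$ it equals $\frac{\Gamma(c)}{\Gamma(a)\Gamma(c-a)}\int_0^1 u^{a-1}(1-u)^{c-a-1}\prod_{i=1}^n(1-x_iu)^{-b_i}\,\mathrm{d}u$, which gives its analytic continuation to $x_i\notin[1,\infty)$. *)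

(* Defs.v *)
From Stdlib Require Import Reals Lra List.
From Coquelicot Require Import Coquelicot.
Import ListNotations.
Open Scope R_scope.

Fixpoint poch (l : R) (m : nat) : R :=
  match m with
  | O => 1
  | S m' => poch l m' * (l + INR m')
  end.

(* Sum of g over all multi-indices ms : list nat of length n with total N. *)
Fixpoint compsum (n N : nat) (g : list nat -> R) : R :=
  match n with
  | O => if Nat.eqb N 0 then g nil else 0
  | S n' => sum_f_R0 (fun k => compsum n' (N - k) (fun l => g (k :: l))) N
  end.

Fixpoint lauricella_prod (bs xs : list R) (ms : list nat) : R :=
  match bs, xs, ms with
  | b :: bs', x :: xs', m :: ms' =>
      poch b m / INR (Factorial.fact m) * x ^ m * lauricella_prod bs' xs' ms'
  | _, _, _ => 1
  end.

(* Lauricella F_D^{(n)}(a; b_1..b_n; c; x_1..x_n), n = length bs (= length xs),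
   as its defining multiple power series, summed by total degree
   |m| = m_1 + ... + m_n (the series converges absolutely for |x_i| < 1). *)
Definition LauricellaFD (a : R) (bs : list R) (c : R) (xs : list R) : R :=
  Series (fun N => compsum (length bs) N
                     (fun ms => poch a N / poch c N * lauricella_prod bs xs ms)).

(* Main.v *)
Require Import Defs.
From Stdlib Require Import Reals List Lra Lia.
From Coquelicot Require Import Coquelicot.
Import ListNotations.
Open Scope R_scope.

Lemma poch_pos a m : 0 < a -> 0 < poch a m.
Proof. intros Ha; induction m; simpl; [lra|]. apply Rmult_lt_0_compat; auto. pose proof (pos_INR m); lra. Qed.

Lemma poch1 m : poch 1 m = INR (Factorial.fact m).
Proof. induction m; simpl poch; [simpl; lra|]. rewrite IHm. change (Factorial.fact (S m)) with (S m * Factorial.fact m)%nat; rewrite mult_INR, S_INR. ring. Qed.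

Lemma poch_ratio a N : 0 < a -> poch a N / poch (a + 1) N = a / (a + INR N).
Proof.
  intros Ha; induction N.
  - simpl. field. lra.
  - simpl poch. rewrite S_INR.
    assert (H1 := poch_pos a N Ha). assert (H2 := poch_pos (a+1) N ltac:(lra)).
    pose proof (pos_INR N).
    replace (poch a N * (a + INR N) / (poch (a + 1) N * (a + 1 + INR N)))
      with (poch a N / poch (a + 1) N * ((a + INR N) / (a + 1 + INR N))) by (field; lra).
    rewrite IHN. field. lra.
Qed.

Lemma compsum_ext n N g h : (forall l, g l = h l) -> compsum n N g = compsum n N h.
Proof.
  revert N g h; induction n; intros N g h H; simpl.
  - destruct (Nat.eqb N 0); auto.
  - apply sum_eq; intros k _. apply IHn. intros; apply H.
Qed.

Lemma compsum_scal n N g k : compsum n N (fun l => k * g l) = k * compsum n N g.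
Proof.
  revert N g; induction n; intros N g; simpl.
  - destruct (Nat.eqb N 0); ring.
  - rewrite scal_sum. apply sum_eq; intros i _. rewrite IHn. ring.
Qed.
Definition bterm (b z : R) (m : nat) : R := poch b m / INR (Factorial.fact m) * z ^ m.

Lemma binom1 z : Rabs z < 1 ->
  is_series (bterm 1 z) (/ (1 - z)) /\ ex_series (fun m => Rabs (bterm 1 z m)).
Proof.
  intros Hz.
  assert (E : forall m, bterm 1 z m = z ^ m).
  { intros m; unfold bterm; rewrite poch1. field. apply INR_fact_neq_0. }
  split.
  - eapply is_series_ext; [intros n; symmetry; apply E|]. now apply is_series_geom.
  - apply ex_series_ext with (fun n => Rabs z ^ n).
    { intros n. rewrite E, RPow_abs; reflexivity. }
    eexists. apply is_series_geom. rewrite Rabs_Rabsolu; auto.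
Qed.

Definition ah (m : nat) : R := poch (1/2) m / INR (Factorial.fact m).

Lemma ah_nz n : ah n <> 0.
Proof.
  unfold ah. pose proof (poch_pos (1/2) n ltac:(lra)). pose proof (INR_fact_neq_0 n).
  pose proof (INR_fact_lt_0 n). apply Rgt_not_eq. apply Rdiv_lt_0_compat; lra.
Qed.

Lemma ah_S n : ah (S n) = ah n * (1/2 + INR n) / INR (S n).
Proof.
  unfold ah. simpl poch. change (Factorial.fact (S n)) with (S n * Factorial.fact n)%nat.
  rewrite mult_INR. field. split; [apply INR_fact_neq_0|]. apply not_0_INR; lia.
Qed.

Lemma ah_rad : CV_radius ah = 1.
Proof.
  rewrite (CV_radius_finite_DAlembert ah 1); [now rewrite Rinv_1| apply ah_nz | lra|].
  apply is_lim_seq_ext with (fun n => 1 - /2 * / INR (S n)).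
  { intros n. rewrite ah_S. pose proof (ah_nz n). rewrite S_INR. pose proof (pos_INR n).
    rewrite Rabs_right.
    - field. lra.
    - replace (ah n * (1 / 2 + INR n) / (INR n + 1) / ah n) with ((1/2 + INR n)/(INR n + 1)) by (field; lra).
      apply Rle_ge, Rdiv_le_0_compat; lra. }
  assert (H0 : is_lim_seq (fun n => / INR (S n)) 0).
  { replace (Finite 0) with (Rbar_inv p_infty) by reflexivity.
    apply is_lim_seq_inv; [|discriminate].
    apply (is_lim_seq_incr_1 INR). apply is_lim_seq_INR. }
  assert (H1 : is_lim_seq (fun n => /2 * / INR (S n)) 0).
  { replace (Finite 0) with (Rbar_mult (/2) 0) by (simpl; f_equal; ring).
    apply is_lim_seq_scal_l; exact H0. }
  replace (Finite 1) with (Finite (1 - 0)) by (f_equal; ring).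
  apply is_lim_seq_minus'; [apply is_lim_seq_const| exact H1].
Qed.

Lemma pser_to a x l : is_pseries a x l -> is_series (fun n => a n * x ^ n) l.
Proof.
  intros H. eapply is_series_ext; [|exact H]. intros n. simpl. rewrite pow_n_pow.
  unfold scal; simpl; unfold mult; simpl. ring.
Qed.

Lemma is_series_decr_1' (a : nat -> R) l : is_series (fun k => a (S k)) (l - a 0%nat) -> is_series a l.
Proof. intros H. apply is_series_decr_1. exact H. Qed.

Lemma is_series_plusR (a b : nat -> R) la lb : is_series a la -> is_series b lb -> is_series (fun n => a n + b n) (la + lb).
Proof. intros H1 H2. exact (is_series_plus _ _ _ _ H1 H2). Qed.

Lemma is_series_scalR c (a : nat -> R) l : is_series a l -> is_series (fun n => c * a n) (c * l).
Proof. intros H. exact (is_series_scal _ _ _ H). Qed.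

Lemma ah_ode z : Rabs z < 1 ->
  PSeries (PS_derive ah) z = / 2 * PSeries ah z + z * PSeries (PS_derive ah) z.
Proof.
  intros Hz.
  assert (Hr : Rbar_lt (Rabs z) (CV_radius ah)) by (rewrite ah_rad; simpl; lra).
  assert (Hr' : Rbar_lt (Rabs z) (CV_radius (PS_derive ah))) by (rewrite CV_radius_derive; auto).
  assert (sP := pser_to _ _ _ (PSeries_correct _ _ (CV_radius_inside _ _ Hr))).
  assert (sD := pser_to _ _ _ (PSeries_correct _ _ (CV_radius_inside _ _ Hr'))).
  set (P := PSeries ah z) in *. set (D := PSeries (PS_derive ah) z) in *.
  assert (s1 : is_series (fun n => INR n * ah n * z ^ n) (z * D)).
  { apply is_series_decr_1'. simpl INR. replace (z * D - 0 * ah 0 * z ^ 0) with (z * D) by ring.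
    assert (Hs := is_series_scal z _ _ sD).
    eapply is_series_ext; [|exact Hs].
    intros n. unfold PS_derive. cbv beta. rewrite !S_INR. unfold scal; simpl; unfold mult; simpl. destruct n; simpl; ring. }
  assert (s2 := is_series_plusR _ _ _ _ (is_series_scalR (/2) _ _ sP) s1).
  assert (s3 : is_series (fun n => PS_derive ah n * z ^ n) (/ 2 * P + z * D)).
  { eapply is_series_ext; [|exact s2]. intros n. cbv beta. unfold PS_derive.
    rewrite ah_S. assert (INR (S n) <> 0) by (apply not_0_INR; lia).
    match goal with |- ?a = ?b => change (@eq R a b) end. field; auto. }
  rewrite <- (is_series_unique _ _ sD). now apply is_series_unique.
Qed.

Lemma binomhalf z : Rabs z < 1 ->
  is_series (bterm (1/2) z) (/ sqrt (1 - z)) /\ ex_series (fun m => Rabs (bterm (1/2) z m)).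
Proof.
  intros Hz.
  assert (Hr : forall z', Rabs z' < 1 -> Rbar_lt (Rabs z') (CV_radius ah))
    by (intros z' H'; rewrite ah_rad; simpl; lra).
  assert (Hs0 : 0 < 1 - z) by (apply Rabs_def2 in Hz; lra).
  assert (Hval : PSeries ah z * sqrt (1 - z) = 1).
  { set (g := fun t => PSeries ah t * sqrt (1 - t)).
    assert (Hd : forall c, Rabs (c - 0) <= Rabs z -> is_derive g c 0).
    { intros c Hc. assert (Hc1 : Rabs c < 1) by (rewrite Rminus_0_r in Hc; lra).
      assert (Hs : 0 < 1 - c) by (apply Rabs_def2 in Hc1; lra).
      assert (H1 := is_derive_PSeries ah c (Hr c Hc1)).
      assert (Hsq : 0 < sqrt (1 - c)) by (apply sqrt_lt_R0; lra).
      assert (H2 : is_derive (fun t => sqrt (1 - t)) c (- / (2 * sqrt (1 - c)))).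
      { auto_derive; [lra|]. unfold Rminus. ring. }
      assert (H3 := is_derive_mult _ _ _ _ _ H1 H2 ltac:(intros; apply Rmult_comm)).
      replace 0 with (plus (mult (PSeries (PS_derive ah) c) (sqrt (1 - c)))
                       (mult (PSeries ah c) (- / (2 * sqrt (1 - c))))).
      { exact H3. }
      unfold plus, mult; simpl.
      assert (E := ah_ode c Hc1).
      set (D := PSeries (PS_derive ah) c) in *. set (P := PSeries ah c) in *.
      assert (EP : P = 2 * D * (sqrt (1 - c) * sqrt (1 - c))).
      { rewrite sqrt_sqrt by lra. nra. }
      rewrite EP. field. lra. }
    destruct (MVT_cor4 g (fun _ => 0) 0 (Rabs z) Hd z ltac:(rewrite Rminus_0_r; lra)) as [c0 [Hc0 _]].
    unfold g in Hc0. rewrite PSeries_0, Rminus_0_r, sqrt_1 in Hc0.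
    replace (ah 0) with 1 in Hc0 by (unfold ah; simpl; field). rewrite Rmult_0_l in Hc0. lra. }
  assert (Hsz : 0 < sqrt (1 - z)) by (apply sqrt_lt_R0; lra).
  split.
  - replace (/ sqrt (1 - z)) with (PSeries ah z).
    + eapply is_series_ext; [|apply pser_to, PSeries_correct, CV_radius_inside, Hr, Hz].
      intros n; reflexivity.
    + apply (Rmult_eq_reg_r (sqrt (1 - z))); [|lra]. rewrite Hval. field. lra.
  - eapply ex_series_ext; [|apply (CV_disk_inside ah z (Hr z Hz))]. intros n; reflexivity.
Qed.

Definition good (b : R) := b = 1 \/ b = 1/2.
Definition binomF (b z : R) : R := Series (bterm b z).

Lemma binom_good b z : good b -> Rabs z < 1 ->
  is_series (bterm b z) (binomF b z) /\ ex_series (fun m => Rabs (bterm b z m)).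
Proof.
  intros [-> | ->] Hz.
  - destruct (binom1 z Hz) as [H1 H2]. unfold binomF. rewrite (is_series_unique _ _ H1). auto.
  - destruct (binomhalf z Hz) as [H1 H2]. unfold binomF. rewrite (is_series_unique _ _ H1). auto.
Qed.

Lemma binomF1 z : Rabs z < 1 -> binomF 1 z = / (1 - z).
Proof. intros Hz. apply is_series_unique, binom1, Hz. Qed.

Lemma binomFhalf z : Rabs z < 1 -> binomF (1/2) z = / sqrt (1 - z).
Proof. intros Hz. apply is_series_unique, binomhalf, Hz. Qed.

Fixpoint prodF (bs xs : list R) (v : R) : R :=
  match bs, xs with
  | b :: bs', x :: xs' => binomF b (x * v) * prodF bs' xs' v
  | _, _ => 1
  end.

Lemma is_series_zero : is_series (fun _ : nat => 0) 0.
Proof.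
  assert (H := is_series_scalR 0 _ _ (is_series_geom (1/2) ltac:(rewrite Rabs_right; lra))).
  rewrite Rmult_0_l in H. eapply is_series_ext; [|exact H]. intros n; simpl; ring.
Qed.

Lemma is_series_single (a : nat -> R) : (forall n, a (S n) = 0) -> is_series a (a 0%nat).
Proof.
  intros H. apply is_series_decr_1'. replace (a 0%nat - a 0%nat) with 0 by ring.
  eapply is_series_ext; [|exact is_series_zero]. intros n; simpl; rewrite H; auto.
Qed.

Lemma prod_series bs : forall xs v, length bs = length xs -> List.Forall good bs ->
  List.Forall (fun x => Rabs (x * v) < 1) xs ->
  is_series (fun N => compsum (length bs) N (lauricella_prod bs xs) * v ^ N) (prodF bs xs v) /\
  ex_series (fun N => Rabs (compsum (length bs) N (lauricella_prod bs xs) * v ^ N)).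
Proof.
  induction bs as [|b bs IH]; intros xs v Hl Hg Hx.
  - destruct xs; [|discriminate]. simpl.
    assert (Hs : forall N, (if Nat.eqb N 0 then 1 else 0) * v ^ N = if Nat.eqb N 0 then 1 else 0).
    { intros [|N]; simpl; ring. }
    split.
    + eapply is_series_ext; [intros N; symmetry; apply Hs|].
      apply (is_series_single (fun N => if Nat.eqb N 0 then 1 else 0)). intros; reflexivity.
    + apply ex_series_ext with (fun N => Rabs (if Nat.eqb N 0 then 1 else 0)).
      { intros N. rewrite Hs. reflexivity. }
      eexists. apply (is_series_single (fun N => Rabs (if Nat.eqb N 0 then 1 else 0))).
      intros n; simpl; apply Rabs_R0.
  - destruct xs as [|x xs]; [discriminate|]. simpl in Hl. injection Hl as Hl.
    inversion Hg as [|? ? Hb Hg']; subst. inversion Hx as [|? ? Hxv Hx']; subst.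
    destruct (IH xs v Hl Hg' Hx') as [IH1 IH2].
    destruct (binom_good b (x * v) Hb Hxv) as [B1 B2].
    set (A := bterm b (x * v)) in *.
    set (B := fun N => compsum (length bs) N (lauricella_prod bs xs) * v ^ N) in *.
    assert (E : forall N, compsum (length (b :: bs)) N (lauricella_prod (b :: bs) (x :: xs)) * v ^ N
                = sum_f_R0 (fun k => A k * B (N - k)%nat) N).
    { intros N. simpl length. simpl compsum. rewrite Rmult_comm, scal_sum.
      apply sum_eq. intros k Hk. 
      rewrite compsum_scal. unfold A, B, bterm.
      assert (Hv : v ^ N = v ^ k * v ^ (N - k)) by (rewrite <- pow_add; f_equal; lia).
      rewrite Hv, Rpow_mult_distr. ring. }
    split.
    + eapply is_series_ext; [intros N; symmetry; apply E|].
      simpl prodF. exact (is_series_mult A B _ _ B1 IH1 B2 IH2).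
    + apply (@ex_series_le R_AbsRing R_CompleteNormedModule) with (fun N => sum_f_R0 (fun k => Rabs (A k) * Rabs (B (N - k)%nat)) N).
      { intros N. rewrite E. unfold norm; simpl; unfold abs; simpl. rewrite Rabs_Rabsolu.
        eapply Rle_trans; [apply sum_f_R0_triangle|]. right; apply sum_eq; intros; apply Rabs_mult. }
      destruct B2 as [la HA]. destruct IH2 as [lb HB].
      eexists. apply (is_series_mult (fun k => Rabs (A k)) (fun k => Rabs (B k)) la lb HA HB).
      * eapply ex_series_ext; [|exists la; exact HA]. intros; simpl; rewrite Rabs_Rabsolu; auto.
      * eapply ex_series_ext; [|exists lb; exact HB]. intros; simpl; rewrite Rabs_Rabsolu; auto.
Qed.

Lemma is_RInt_R_plus (f g : R -> R) a b If Ig :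
  is_RInt f a b If -> is_RInt g a b Ig -> is_RInt (fun t => f t + g t) a b (If + Ig).
Proof. intros H1 H2. exact (is_RInt_plus _ _ _ _ _ _ H1 H2). Qed.

Lemma is_RInt_R_scal (f : R -> R) a b k If :
  is_RInt f a b If -> is_RInt (fun t => k * f t) a b (k * If).
Proof. intros H. exact (is_RInt_scal _ _ _ _ _ H). Qed.

Lemma is_RInt_mono n : is_RInt (fun t => t ^ n) 0 1 (/ INR (S n)).
Proof.
  assert (Hn : INR (S n) <> 0) by (apply not_0_INR; lia).
  assert (H := is_RInt_derive (fun t => t ^ (S n) / INR (S n)) (fun t => t ^ n) 0 1).
  replace (/ INR (S n)) with (minus (1 ^ (S n) / INR (S n)) (0 ^ (S n) / INR (S n))).
  - apply H.
    + intros x _. auto_derive; auto.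
      change (match n with 0%nat => 1 | S _ => INR n + 1 end) with (INR (S n)). field; auto.
    + intros x _. exact (@ex_derive_continuous R_AbsRing R_NormedModule (fun t => t^n) x ltac:(auto_derive; auto)).
  - unfold minus, plus, opp; simpl. rewrite pow1. field. auto.
Qed.

Definition clamp (t : R) : R := Rmax 0 (Rmin 1 t).

Lemma clamp_range t : 0 <= clamp t <= 1.
Proof. unfold clamp, Rmax, Rmin. repeat destruct Rle_dec; lra. Qed.

Lemma clamp_id t : 0 <= t <= 1 -> clamp t = t.
Proof. intros H. unfold clamp, Rmax, Rmin. repeat destruct Rle_dec; lra. Qed.

Lemma pow_le1 v n : 0 <= v <= 1 -> v ^ n <= 1.
Proof. intros H; induction n; simpl; [lra|]. assert (0 <= v ^ n) by (apply pow_le; lra). nra. Qed.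

Lemma tail_bound (C : nat -> R) (Pf : R -> R) M v :
  is_series (fun N => C N * v ^ N) (Pf v) -> 0 <= v <= 1 ->
  ex_series (fun N => Rabs (C N)) ->
  Rabs (Pf v - sum_f_R0 (fun N => C N * v ^ N) M)
    <= Series (fun N => Rabs (C N)) - sum_f_R0 (fun N => Rabs (C N)) M.
Proof.
  intros Hs Hv HC.
  assert (Hex : ex_series (fun N => C N * v ^ N)) by (eexists; exact Hs).
  rewrite <- (is_series_unique _ _ Hs).
  rewrite (Series_incr_n _ (S M)) by (lia || auto).
  rewrite (Series_incr_n (fun N => Rabs (C N)) (S M)) by (lia || auto).
  simpl pred. ring_simplify.
  assert (HC' : ex_series (fun j => Rabs (C (S M + j)%nat))).
  { apply (ex_series_incr_n (fun N => Rabs (C N)) (S M)); auto. }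
  assert (Hab : ex_series (fun j => Rabs (C (S M + j)%nat * v ^ (S M + j)))).
  { apply (@ex_series_le R_AbsRing R_CompleteNormedModule) with (fun j => Rabs (C (S M + j)%nat)); auto.
    intros n. unfold norm; simpl; unfold abs; simpl. rewrite Rabs_Rabsolu, Rabs_mult.
    rewrite <- (Rmult_1_r (Rabs (C _))) at 2. apply Rmult_le_compat_l; [apply Rabs_pos|].
    rewrite Rabs_right; [apply (pow_le1 v (S (M+n))); auto | apply Rle_ge, (pow_le v (S (M+n))); lra]. }
  match goal with |- Rabs (?a + ?b - ?a) <= _ => replace (a + b - a) with b by ring end.
  eapply Rle_trans; [apply Series_Rabs; exact Hab|].
  apply Series_le; [|exact HC'].
  intros n. split; [apply Rabs_pos|]. rewrite Rabs_mult.
  rewrite <- (Rmult_1_r (Rabs (C _))) at 2. apply Rmult_le_compat_l; [apply Rabs_pos|].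
  rewrite Rabs_right; [apply pow_le1; auto | apply Rle_ge, pow_le; lra].
Qed.

Lemma Tm (C : nat -> R) k N :
  is_RInt (fun t => C N * clamp t ^ (2*N + 2*k)) 0 1 (C N / INR (2*N + 2*k + 1)).
Proof.
  replace (2*N + 2*k + 1)%nat with (S (2*N + 2*k)) by lia.
  eapply is_RInt_ext; [|apply is_RInt_R_scal, is_RInt_mono].
  intros x Hx. rewrite Rmin_left, Rmax_right in Hx by lra. rewrite clamp_id by lra. reflexivity.
Qed.

Lemma sum_pow_fact (C : nat -> R) k s M :
  sum_f_R0 (fun N => C N * s ^ (2*N + 2*k)) M = s ^ (2*k) * sum_f_R0 (fun N => C N * (s^2) ^ N) M.
Proof.
  rewrite scal_sum. apply sum_eq. intros i _. rewrite pow_add, <- pow_mult.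
  replace (2 * i)%nat with (i * 2)%nat by lia. ring.
Qed.

Lemma int_series (C : nat -> R) (Pf : R -> R) (k : nat) :
  (forall v, 0 <= v <= 1 -> is_series (fun N => C N * v ^ N) (Pf v)) ->
  ex_series (fun N => Rabs (C N)) ->
  exists If, is_series (fun N => C N / INR (2*N + 2*k + 1)) If /\
             is_RInt (fun t => t ^ (2*k) * Pf (t^2)) 0 1 If.
Proof.
  intros Hs HC.
  set (f := fun (M:nat) (t:R) => sum_f_R0 (fun N => C N * clamp t ^ (2*N + 2*k)) M).
  set (h := fun M => sum_f_R0 (fun N => C N / INR (2*N + 2*k + 1)) M).
  set (g := fun t => clamp t ^ (2*k) * Pf (clamp t ^ 2)).
  assert (Hf : forall M, is_RInt (f M) 0 1 (h M)).
  { intros M. induction M.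
    - apply Tm.
    - exact (is_RInt_R_plus _ _ 0 1 _ _ IHM (Tm C k (S M))). }
  assert (Hu : filterlim f eventually (locally (g : fct_UniformSpace R R_CompleteNormedModule))).
  { apply filterlim_locally. intros eps.
    assert (HC0 := HC). destruct HC0 as [S HS].
    assert (HSe := proj1 (filterlim_locally _ _) HS eps).
    destruct HSe as [N0 HN0]. exists N0. intros M HM t.
    specialize (HN0 M HM).
    change (Rabs (f M t - g t) < eps).
    change (Rabs (sum_n (fun N => Rabs (C N)) M - S) < eps) in HN0.
    rewrite sum_n_Reals in HN0.
    unfold f, g. rewrite sum_pow_fact.
    set (s := clamp t). assert (Hs01 := clamp_range t). fold s in Hs01.
    assert (Hv : 0 <= s ^ 2 <= 1) by (split; [apply pow2_ge_0| apply pow_le1; auto]).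
    assert (TB := tail_bound C Pf M (s^2) (Hs (s^2) Hv) Hv HC).
    rewrite (is_series_unique _ _ HS) in TB.
    replace (s ^ (2 * k) * sum_f_R0 (fun N : nat => C N * (s ^ 2) ^ N) M - s ^ (2 * k) * Pf (s ^ 2))
      with (- (s ^ (2 * k) * (Pf (s^2) - sum_f_R0 (fun N : nat => C N * (s ^ 2) ^ N) M))) by ring.
    rewrite Rabs_Ropp, Rabs_mult.
    assert (Hp : Rabs (s ^ (2*k)) <= 1).
    { rewrite Rabs_right; [apply pow_le1; auto| apply Rle_ge, pow_le; lra]. }
    assert (0 <= Rabs (Pf (s ^ 2) - sum_f_R0 (fun N : nat => C N * (s ^ 2) ^ N) M)) by apply Rabs_pos.
    assert (0 <= Rabs (s ^ (2*k))) by apply Rabs_pos.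
    assert (S - sum_f_R0 (fun N => Rabs (C N)) M < eps).
    { rewrite Rabs_minus_sym in HN0. eapply Rle_lt_trans; [apply Rle_abs|exact HN0]. }
    nra. }
  destruct (filterlim_RInt f 0 1 eventually eventually_filter g h Hf Hu) as [If [H1 H2]].
  exists If. split.
  - unfold is_series. eapply filterlim_ext; [|exact H1]. intros M; unfold h; rewrite sum_n_Reals; reflexivity.
  - eapply is_RInt_ext; [|exact H2]. intros x Hx. rewrite Rmin_left, Rmax_right in Hx by lra.
    unfold g. rewrite clamp_id by lra. reflexivity.
Qed.

Lemma alg_core (d sd t s1 s3 s4 D1 D2 c2 Q : R) :
  sd * sd = d -> sd <> 0 -> t <> 0 -> s1 <> 0 -> s3 <> 0 -> s4 <> 0 -> D1 <> 0 -> D2 <> 0 -> c2 <> 0 ->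
  2 * d * t * (Q / (c2 * D1 * D2) * / (s1 * sd * t * s3 * s4))
  = sd / (c2 * s1) * (2 * Q) * (/ D1 * (/ D2 * (/ s3 * (/ s4 * 1)))).
Proof. intros <- *. intros. field. repeat split; auto. Qed.

Lemma pointwise (a b c y alpha t : R) :
  0 < c -> c < y -> y < 1 -> y < b -> b < a -> 0 < t <= 1 ->
  2 * (y - c) * t *
   ((1 - alpha * (c + (y - c) * t ^ 2)) / (1 - (c + (y - c) * t ^ 2) ^ 2) *
    ((c + (y - c) * t ^ 2) / sqrt ((a - (c + (y - c) * t ^ 2)) * (b - (c + (y - c) * t ^ 2)) * ((c + (y - c) * t ^ 2) - c))))
  = sqrt (y - c) / ((1 - c ^ 2) * sqrt ((a - c) * (b - c))) *
    (2 * c * (1 - c * alpha) + 2 * (1 - 2 * c * alpha) * (y - c) * t ^ 2 - 2 * alpha * (y - c) ^ 2 * t ^ 4) *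
    (/ (1 - (y - c) / (1 - c) * t ^ 2) * (/ (1 - - ((y - c) / (1 + c)) * t ^ 2) *
     (/ sqrt (1 - - ((y - c) / (c - a)) * t ^ 2) * (/ sqrt (1 - - ((y - c) / (c - b)) * t ^ 2) * 1)))).
Proof.
  intros hc hcy hy1 hyb hba ht.
  set (d := y - c). assert (hd : 0 < d) by (unfold d; lra).
  set (v := t ^ 2).
  assert (hv : 0 < v <= 1) by (unfold v; split; [apply pow_lt; lra| apply pow_le1; lra]).
  assert (hdv : d * v <= d) by nra. assert (hdv0 : 0 <= d * v) by nra.
  assert (hd1 : d < 1 - c) by (unfold d; lra).
  assert (hda : d < a - c) by (unfold d; lra).
  assert (hdb : d < b - c) by (unfold d; lra).
  assert (E3 : 1 - - (d / (c - a)) * v = (a - c - d * v) / (a - c)) by (field; lra).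
  assert (E4 : 1 - - (d / (c - b)) * v = (b - c - d * v) / (b - c)) by (field; lra).
  assert (P3 : 0 < 1 - - (d / (c - a)) * v) by (rewrite E3; apply Rdiv_lt_0_compat; lra).
  assert (P4 : 0 < 1 - - (d / (c - b)) * v) by (rewrite E4; apply Rdiv_lt_0_compat; lra).
  assert (E1 : 1 - d / (1 - c) * v = (1 - c - d * v) / (1 - c)) by (field; lra).
  assert (E2 : 1 - - (d / (1 + c)) * v = (1 + c + d * v) / (1 + c)) by (field; lra).
  assert (P1 : 0 < 1 - d / (1 - c) * v) by (rewrite E1; apply Rdiv_lt_0_compat; lra).
  assert (P2 : 0 < 1 - - (d / (1 + c)) * v) by (rewrite E2; apply Rdiv_lt_0_compat; lra).
  assert (hab : 0 < (a - c) * (b - c)) by (apply Rmult_lt_0_compat; lra).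
  set (s1 := sqrt ((a - c) * (b - c))). set (sd := sqrt d).
  set (s3 := sqrt (1 - - (d / (c - a)) * v)). set (s4 := sqrt (1 - - (d / (c - b)) * v)).
  assert (Hs1 : 0 < s1) by (apply sqrt_lt_R0; lra).
  assert (Hsd : 0 < sd) by (apply sqrt_lt_R0; lra).
  assert (Hs3 : 0 < s3) by (apply sqrt_lt_R0; lra).
  assert (Hs4 : 0 < s4) by (apply sqrt_lt_R0; lra).
  assert (Q1 : s1 * s1 = (a - c) * (b - c)) by (apply sqrt_sqrt; lra).
  assert (Qd : sd * sd = d) by (apply sqrt_sqrt; lra).
  assert (Q3 : s3 * s3 = 1 - - (d / (c - a)) * v) by (apply sqrt_sqrt; lra).
  assert (Q4 : s4 * s4 = 1 - - (d / (c - b)) * v) by (apply sqrt_sqrt; lra).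
  assert (HS : sqrt ((a - (c + d * v)) * (b - (c + d * v)) * (c + d * v - c)) = s1 * sd * t * s3 * s4).
  { replace ((a - (c + d * v)) * (b - (c + d * v)) * (c + d * v - c))
      with ((s1 * sd * t * s3 * s4) * (s1 * sd * t * s3 * s4)).
    - apply sqrt_square. assert (0 < s1 * sd * t * s3 * s4).
      { repeat apply Rmult_lt_0_compat; lra. } lra.
    - transitivity ((s1 * s1) * (sd * sd) * (t * t) * (s3 * s3) * (s4 * s4)); [ring|].
      rewrite Q1, Qd, Q3, Q4, E3, E4. unfold v. field. lra. }
  assert (HU : 1 - (c + d * v) ^ 2 = (1 - c ^ 2) * (1 - d / (1 - c) * v) * (1 - - (d / (1 + c)) * v)).
  { rewrite E1, E2. field. lra. }
  assert (HP : 2 * c * (1 - c * alpha) + 2 * (1 - 2 * c * alpha) * d * v - 2 * alpha * d ^ 2 * t ^ 4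
              = 2 * ((1 - alpha * (c + d * v)) * (c + d * v))).
  { unfold v. ring. }
  rewrite HS, HU, HP. fold s1. fold sd.
  set (D1 := 1 - d / (1 - c) * v). set (D2 := 1 - - (d / (1 + c)) * v).
  set (Q := (1 - alpha * (c + d * v)) * (c + d * v)).
  set (c2 := 1 - c ^ 2).
  assert (Hc2 : c2 <> 0) by (unfold c2; nra).
  assert (HD1 : D1 <> 0) by (unfold D1; apply Rgt_not_eq; lra).
  assert (HD2 : D2 <> 0) by (unfold D2; apply Rgt_not_eq; lra).
  rewrite <- (alg_core d sd t s1 s3 s4 D1 D2 c2 Q); try lra; auto.
  unfold Q. field. repeat split; (lra || auto).
Qed.

Lemma div_bounds p q : 0 < p < q -> 0 < p / q < 1.
Proof.
  intros H. split; [apply Rdiv_lt_0_compat; lra|].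
  apply (Rmult_lt_reg_r q); [lra|]. unfold Rdiv. rewrite Rmult_assoc, Rinv_l by lra. lra.
Qed.

Lemma absxv x v : Rabs x < 1 -> 0 <= v <= 1 -> Rabs (x * v) < 1.
Proof.
  intros Hx Hv. rewrite Rabs_mult, (Rabs_right v) by lra.
  assert (0 <= Rabs x) by apply Rabs_pos. nra.
Qed.

Lemma LFD_val bs xs a k If : a = (2 * INR k + 1) / 2 ->
  is_series (fun N => compsum (length bs) N (lauricella_prod bs xs) / INR (2*N + 2*k + 1)) If ->
  LauricellaFD a bs (a + 1) xs = (2 * INR k + 1) * If.
Proof.
  intros Ha H. unfold LauricellaFD. apply is_series_unique.
  eapply is_series_ext; [|apply (is_series_scalR (2 * INR k + 1)); exact H].
  intros N. cbv beta. match goal with |- ?a = ?b => change (@eq R a b) end. rewrite compsum_scal.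
  assert (0 <= INR k) by apply pos_INR. assert (0 <= INR N) by apply pos_INR.
  rewrite poch_ratio by lra. rewrite !plus_INR, !mult_INR. subst a. simpl INR.
  field. lra.
Qed.

Lemma bnd3 A p PF S : Rabs p <= 1 -> Rabs PF <= S -> Rabs (A * (p * PF)) <= Rabs A * S.
Proof.
  intros H1 H2. rewrite !Rabs_mult.
  assert (0 <= Rabs A) by apply Rabs_pos. assert (0 <= Rabs p) by apply Rabs_pos.
  assert (0 <= Rabs PF) by apply Rabs_pos.
  assert (Rabs p * Rabs PF <= S) by nra. apply Rmult_le_compat_l; auto.
Qed.

Lemma ballR (x e z : R) : Rabs (z - x) < e -> ball x e z.
Proof. intros H. exact H. Qed.

Theorem mainTheorem2 (a b c y alpha : R)
  (hc : 0 < c) (hcy : c < y) (hy1 : y < 1) (hyb : y < b) (hba : b < a) :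
  let xs := [ (y - c) / (1 - c); - ((y - c) / (1 + c));
              - ((y - c) / (c - a)); - ((y - c) / (c - b)) ] in
  let bs := [1; 1; 1 / 2; 1 / 2] in
  let X := LauricellaFD (1 / 2) bs (3 / 2) xs in
  let Y := LauricellaFD (3 / 2) bs (5 / 2) xs in
  let Z := LauricellaFD (5 / 2) bs (7 / 2) xs in
  is_RInt_gen
    (fun u => (1 - alpha * u) / (1 - u ^ 2) *
              (u / sqrt ((a - u) * (b - u) * (u - c))))
    (at_right c) (at_point y)
    (sqrt (y - c) / ((1 - c ^ 2) * sqrt ((a - c) * (b - c))) *
     (2 * c * (1 - c * alpha) * X
      + 2 / 3 * (1 - 2 * c * alpha) * (y - c) * Y
      - 2 / 5 * alpha * (y - c) ^ 2 * Z)).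
Proof.
  intros xs bs X Y Z.
  assert (B1 : Rabs ((y - c) / (1 - c)) < 1).
  { apply Rabs_def1; assert (h := div_bounds (y - c) (1 - c) ltac:(lra)); lra. }
  assert (B2 : Rabs (- ((y - c) / (1 + c))) < 1).
  { apply Rabs_def1; assert (h := div_bounds (y - c) (1 + c) ltac:(lra)); lra. }
  assert (B3 : Rabs (- ((y - c) / (c - a))) < 1).
  { replace (- ((y - c) / (c - a))) with ((y - c) / (a - c)) by (field; lra).
    apply Rabs_def1; assert (h := div_bounds (y - c) (a - c) ltac:(lra)); lra. }
  assert (B4 : Rabs (- ((y - c) / (c - b))) < 1).
  { replace (- ((y - c) / (c - b))) with ((y - c) / (b - c)) by (field; lra).
    apply Rabs_def1; assert (h := div_bounds (y - c) (b - c) ltac:(lra)); lra. }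
  assert (Hx : forall v, 0 <= v <= 1 -> List.Forall (fun x => Rabs (x * v) < 1) xs).
  { intros v Hv. unfold xs. repeat constructor; apply absxv; auto. }
  assert (Hg : List.Forall good bs).
  { unfold bs, good. repeat constructor; lra. }
  set (C := fun N => compsum (length bs) N (lauricella_prod bs xs)).
  assert (HPS : forall v, 0 <= v <= 1 -> is_series (fun N => C N * v ^ N) (prodF bs xs v)).
  { intros v Hv. apply (prod_series bs xs v eq_refl Hg (Hx v Hv)). }
  assert (HCabs : ex_series (fun N => Rabs (C N))).
  { destruct (prod_series bs xs 1 eq_refl Hg (Hx 1 ltac:(lra))) as [_ H].
    apply (ex_series_ext (fun N => Rabs (C N * 1 ^ N))); [|exact H]. intros N. rewrite pow1, Rmult_1_r. reflexivity. }
  destruct (int_series C (prodF bs xs) 0 HPS HCabs) as [I0 [S0 R0]].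
  destruct (int_series C (prodF bs xs) 1 HPS HCabs) as [I1 [S1 R1]].
  destruct (int_series C (prodF bs xs) 2 HPS HCabs) as [I2 [S2 R2]].
  assert (HX : X = I0).
  { unfold X. replace (3/2) with (1/2 + 1) by lra.
    rewrite (LFD_val bs xs (1/2) 0 I0); [simpl; ring | simpl; lra | exact S0]. }
  assert (HY : Y = 3 * I1).
  { unfold Y. replace (5/2) with (3/2 + 1) by lra.
    rewrite (LFD_val bs xs (3/2) 1 I1); [simpl; ring | simpl; lra | exact S1]. }
  assert (HZ : Z = 5 * I2).
  { unfold Z. replace (7/2) with (5/2 + 1) by lra.
    rewrite (LFD_val bs xs (5/2) 2 I2); [simpl; ring | simpl; lra | exact S2]. }
  set (K := sqrt (y - c) / ((1 - c ^ 2) * sqrt ((a - c) * (b - c)))).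
  set (A0 := 2 * c * (1 - c * alpha)).
  set (A1 := 2 * (1 - 2 * c * alpha) * (y - c)).
  set (A2 := 2 * alpha * (y - c) ^ 2).
  set (H := fun t => K * (A0 * (t ^ (2 * 0) * prodF bs xs (t ^ 2)) + A1 * (t ^ (2 * 1) * prodF bs xs (t ^ 2))
                          + - A2 * (t ^ (2 * 2) * prodF bs xs (t ^ 2)))).
  set (L := K * (A0 * I0 + A1 * I1 + - A2 * I2)).
  assert (HI : is_RInt H 0 1 L).
  { apply is_RInt_R_scal. apply is_RInt_R_plus; [apply is_RInt_R_plus|]; apply is_RInt_R_scal; auto. }
  assert (Hs1 : 0 < sqrt ((a - c) * (b - c))) by (apply sqrt_lt_R0; apply Rmult_lt_0_compat; lra).
  assert (Hc2 : 0 < 1 - c ^ 2) by nra.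
  assert (HLeq : K * (A0 * X + 2 / 3 * (1 - 2 * c * alpha) * (y - c) * Y - 2 / 5 * alpha * (y - c) ^ 2 * Z) = L).
  { rewrite HX, HY, HZ. unfold L, K, A0, A1, A2. field. lra. }
  set (f := fun u => (1 - alpha * u) / (1 - u ^ 2) * (u / sqrt ((a - u) * (b - u) * (u - c)))).
  assert (HPW : forall t, 0 < t <= 1 -> 2 * (y - c) * t * f (c + (y - c) * t ^ 2) = H t).
  { intros t Ht. unfold f. rewrite pointwise by (auto; lra).
    assert (Hv : 0 <= t ^ 2 <= 1) by (split; [apply pow2_ge_0| apply pow_le1; lra]).
    unfold H. unfold bs, xs. simpl prodF.
    rewrite !binomF1, !binomFhalf by (apply absxv; auto).
    unfold K, A0, A1, A2. simpl. ring. }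
  assert (Hcont : forall u, c < u <= y -> continuous f u).
  { intros u Hu.
    assert (Hp : 0 < (a - u) * (b - u) * (u - c)).
    { apply Rmult_lt_0_compat; [apply Rmult_lt_0_compat|]; lra. }
    assert (Hsq : 0 < sqrt ((a - u) * (b - u) * (u - c))) by (apply sqrt_lt_R0; lra).
    assert (Hu2 : 1 - u ^ 2 <> 0) by (apply Rgt_not_eq; nra).
    apply (@ex_derive_continuous R_AbsRing R_NormedModule f u).
    unfold f. auto_derive. repeat split; try lra; auto. all: apply Rgt_not_eq; unfold Rminus in Hsq; exact Hsq. }
  set (SC := Series (fun N => Rabs (C N))).
  assert (HPF : forall v, 0 <= v <= 1 -> Rabs (prodF bs xs v) <= SC).
  { intros v Hv. assert (T := tail_bound C (prodF bs xs) 0 v (HPS v Hv) Hv HCabs).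
    simpl sum_f_R0 in T. fold SC in T.
    assert (T2 := Rabs_triang (prodF bs xs v - C 0%nat * 1) (C 0%nat * 1)).
    replace (prodF bs xs v - C 0%nat * 1 + C 0%nat * 1) with (prodF bs xs v) in T2 by ring.
    rewrite Rmult_1_r in T2 at 2. lra. }
  set (MB := Rabs K * (Rabs A0 * SC + Rabs A1 * SC + Rabs (- A2) * SC)).
  assert (HMB : forall t, 0 <= t <= 1 -> Rabs (H t) <= MB).
  { intros t Ht. unfold H, MB. rewrite Rabs_mult. apply Rmult_le_compat_l; [apply Rabs_pos|].
    assert (Hv : 0 <= t ^ 2 <= 1) by (split; [apply pow2_ge_0| apply pow_le1; lra]).
    assert (Hp : forall k, Rabs (t ^ k) <= 1).
    { intros k. rewrite Rabs_right; [apply pow_le1; lra| apply Rle_ge, pow_le; lra]. }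
    eapply Rle_trans; [apply Rabs_triang|]. apply Rplus_le_compat; [eapply Rle_trans; [apply Rabs_triang|]; apply Rplus_le_compat|];
      apply bnd3; auto. }
  assert (HMB0 : 0 <= MB).
  { eapply Rle_trans; [apply Rabs_pos| apply (HMB 0); lra]. }
  intros P HP. change (locally (K * (A0 * X + 2 / 3 * (1 - 2 * c * alpha) * (y - c) * Y - 2 / 5 * alpha * (y - c) ^ 2 * Z)) P) in HP.
  rewrite HLeq in HP. destruct HP as [eps Heps].
  set (r := eps / (MB + 1)).
  assert (Hr : 0 < r) by (unfold r; apply Rdiv_lt_0_compat; [apply cond_pos| lra]).
  set (dl := Rmin (y - c) ((y - c) * (r * r))).
  assert (Hdl : 0 < dl) by (unfold dl; apply Rmin_pos; [lra| apply Rmult_lt_0_compat; nra]).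
  assert (Hdl1 : dl <= y - c) by apply Rmin_l.
  assert (Hdl2 : dl <= (y - c) * (r * r)) by apply Rmin_r.
  apply (Filter_prod _ _ _ (fun e => c < e < c + dl) (fun z => z = y)).
  - exists (mkposreal dl Hdl). intros e He Hce.
    change (Rabs (e - c) < dl) in He. apply Rabs_def2 in He. lra.
  - reflexivity.
  - intros e z [He1 He2] Hz. subst z. simpl fst. simpl snd.
    assert (Hq : 0 < (e - c) / (y - c) < 1) by (apply div_bounds; lra).
    set (t0 := sqrt ((e - c) / (y - c))).
    assert (Ht0 : 0 < t0 < 1).
    { split; [apply sqrt_lt_R0; lra|]. rewrite <- sqrt_1. apply sqrt_lt_1_alt. lra. }
    assert (Ht0sq : t0 ^ 2 = (e - c) / (y - c)).
    { unfold t0. simpl. rewrite Rmult_1_r. apply sqrt_sqrt. lra. }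
    assert (Hc1 : forall x, Rmin t0 1 <= x <= Rmax t0 1 -> continuous f (c + (y - c) * x ^ 2)).
    { intros x Hxx. rewrite Rmin_left, Rmax_right in Hxx by lra. apply Hcont.
      assert (0 < x ^ 2) by (apply pow_lt; lra). assert (x ^ 2 <= 1) by (apply pow_le1; lra).
      split; nra. }
    assert (Hd1 : forall x, Rmin t0 1 <= x <= Rmax t0 1 ->
              is_derive (fun t => c + (y - c) * t ^ 2) x (2 * (y - c) * x) /\ continuous (fun t => 2 * (y - c) * t) x).
    { intros x _. split.
      - auto_derive; auto. ring.
      - apply (@ex_derive_continuous R_AbsRing R_NormedModule (fun t => 2 * (y - c) * t) x). auto_derive; auto. }
    assert (Hcomp := is_RInt_comp f (fun t => c + (y - c) * t ^ 2) (fun t => 2 * (y - c) * t) t0 1 Hc1 Hd1).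
    cbv beta in Hcomp. replace (c + (y - c) * t0 ^ 2) with e in Hcomp by (rewrite Ht0sq; field; lra).
    replace (c + (y - c) * 1 ^ 2) with y in Hcomp by ring.
    assert (HH : is_RInt H t0 1 (RInt f e y)).
    { eapply is_RInt_ext; [|exact Hcomp]. intros x Hxx. rewrite Rmin_left, Rmax_right in Hxx by lra.
      exact (HPW x ltac:(lra)). }
    exists (RInt f e y). split.
    + apply (@RInt_correct R_CompleteNormedModule), (@ex_RInt_continuous R_CompleteNormedModule). intros z Hz. rewrite Rmin_left, Rmax_right in Hz by lra.
      apply Hcont; lra.
    + apply Heps. apply ballR.
      rewrite <- (is_RInt_unique _ _ _ _ HH).
      assert (E0 : ex_RInt (V:=R_CompleteNormedModule) H 0 1) by (exists L; exact HI).
      assert (E1 : ex_RInt (V:=R_CompleteNormedModule) H 0 t0) by (apply ex_RInt_Chasles_1 with 1; [lra| exact E0]).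
      assert (E2 : ex_RInt (V:=R_CompleteNormedModule) H t0 1) by (exists (RInt f e y); exact HH).
      assert (Ch := RInt_Chasles H 0 t0 1 E1 E2). rewrite (is_RInt_unique _ _ _ _ HI) in Ch.
      change (RInt H 0 t0 + RInt H t0 1 = L) in Ch.
      replace (RInt H t0 1 - L) with (- RInt H 0 t0) by lra. rewrite Rabs_Ropp.
      assert (Hb := abs_RInt_le_const H 0 t0 MB ltac:(lra) E1 ltac:(intros; apply HMB; lra)).
      eapply Rle_lt_trans; [exact Hb|].
      assert (Htr : t0 < r).
      { unfold t0. rewrite <- (sqrt_square r) by lra. apply sqrt_lt_1_alt. split; [lra|].
        apply (Rmult_lt_reg_r (y - c)); [lra|]. unfold Rdiv. rewrite Rmult_assoc, Rinv_l by lra. nra. }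
      assert (Hre : r * (MB + 1) = eps) by (unfold r; field; lra).
      nra.
Qed.
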